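(* Let $f\colon\prod_{i\in[n]}X_i\to Y$ and let $\varphi_k\colon X_k\to Y$ ($k\in[n]$) be maps satisfying the boundary condition $\varphi_k(0_{X_k})\le\varphi_k(x_k)\le\varphi_k(1_{X_k})$ for all $x_k\in X_k$. Suppose that for every $k\in[n]$ and every $\mathbf{x}\in\prod_{i\in[n]}X_i$, $$f(\mathbf{x})=\operatorname{med}\big(f(\mathbf{x}_k^0),\varphi_k(x_k),f(\mathbf{x}_k^1)\big).$$ Then $f(\mathbf{x})=p_0(\varphi_1(x_1),\ldots,\varphi_n(x_n))$ for all $\mathbf{x}$, where $p_0\colon Y^n\to Y$ is the polynomial function $$p_0(y_1,\ldots,y_n)=\bigvee_{I\subseteq[n]}\Big(f(\widehat{\mathbf{1}}_I)\wedge\bigwedge_{i\in I}y_i\Big).$$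
   Context: $Y$ is a finite distributive lattice with operations $\wedge,\vee$, least element $0$ and greatest element $1$. $[n]=\{1,\ldots,n\}$. $X_1,\ldots,X_n$ are arbitrary sets with at least two elements, and in each $X_k$ two distinct elements $0_{X_k},1_{X_k}$ (written $0,1$) are fixed. For $\mathbf{x}\in\prod_{i\in[n]}X_i$ and $a\in X_k$, $\mathbf{x}_k^a$ denotes the tuple agreeing with $\mathbf{x}$ except that its $k$-th component is $a$. For $I\subseteq[n]$, $\widehat{\mathbf{1}}_I\in\prod_{i\in[n]}X_i$ is the tuple whose $i$-th component is $1_{X_i}$ if $i\in I$ and $0_{X_i}$ otherwise. $\operatorname{med}(y_1,y_2,y_3)=(y_1\wedge y_2)\vee(y_2\wedge y_3)\vee(y_3\wedge y_1)$. An empty meet $\bigwedge_{i\in\emptyset}y_i$ equals $1$. *)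

(* Defs.v *)
From HB Require Import structures.
From mathcomp Require Import all_boot all_order.
Set Implicit Arguments. Unset Strict Implicit. Unset Printing Implicit Defensive.
Import Order.TTheory.
Local Open Scope order_scope.

Definition med {d} {Y : latticeType d} (y1 y2 y3 : Y) : Y :=
  (y1 `&` y2) `|` (y2 `&` y3) `|` (y3 `&` y1).

Definition upd {n : nat} {X : 'I_n -> Type} (x : forall i, X i) (k : 'I_n) (a : X k)
  : forall i, X i := @dfwith _ X x k a.

Definition hat1 {n : nat} {X : 'I_n -> Type} (x0 x1 : forall i, X i) (I : {set 'I_n})
  : forall i, X i := fun i => if i \in I then x1 i else x0 i.

Definition p0 {d} {Y : finTBDistrLatticeType d} {n : nat} {X : 'I_n -> Type}
  (x0 x1 : forall i, X i) (f : (forall i, X i) -> Y) (y : 'I_n -> Y) : Y :=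
  \join_(I : {set 'I_n}) (f (hat1 x0 x1 I) `&` \meet_(i in I) y i).
Arguments upd {n X} x k a _.

(* Main.v *)
Require Import Defs.
From HB Require Import structures.
From mathcomp Require Import all_boot all_order.
From Stdlib Require Import FunctionalExtensionality.
Import Order.TTheory.
Local Open Scope order_scope.

Lemma med_le d (Y : distrLatticeType d) (a y b : Y) : a <= b ->
  med a y b = a `|` (y `&` b).
Proof.
move=> ab; rewrite /med (meet_idPr ab).
apply: le_anti; rewrite !leUx.
repeat (apply/andP; split).
- by apply: lexUl; apply: leIl.
- exact: leUr.
- exact: leUl.
- exact: leUr.
- by apply: lexUl; apply: leUr.
Qed.

Lemma med_mono d (Y : latticeType d) (a p q b : Y) : p <= q ->
  med a p b <= med a q b.
Proof.
move=> pq; rewrite /med; apply: leU2; [apply: leU2|] => //; apply: leI2 => //.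
Qed.

Lemma upd_upd n (X : 'I_n -> Type) (z : forall i, X i) k (a b : X k) :
  upd (upd z k a) k b = upd z k b.
Proof.
apply: functional_extensionality_dep => i; rewrite /upd.
case: (eqVneq k i) => [<-|ki]; first by rewrite !dfwith_in.
by rewrite !dfwith_out.
Qed.

Lemma key d (Y : finTBDistrLatticeType d) (n : nat)
  (X : 'I_n -> Type) (x0 x1 : forall i, X i)
  (f : (forall i, X i) -> Y) (phi : forall k : 'I_n, X k -> Y)
  (hbound : forall (k : 'I_n) (a : X k), phi k (x0 k) <= phi k a <= phi k (x1 k))
  (hmed : forall (k : 'I_n) (x : forall i, X i),
     f x = med (f (upd x k (x0 k))) (phi k (x k)) (f (upd x k (x1 k)))) k z :
  f z = f (upd z k (x0 k)) `|` (phi k (z k) `&` f (upd z k (x1 k))).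
Proof.
have ab : f (upd z k (x0 k)) <= f (upd z k (x1 k)).
  rewrite (hmed k (upd z k (x0 k))) (hmed k (upd z k (x1 k))) !upd_upd.
  apply: med_mono; rewrite /upd !dfwith_in.
  by case/andP: (hbound k (x1 k)) => /le_trans + _; apply.
by rewrite {1}(hmed k z) med_le.
Qed.

Definition fixv {n} {X : 'I_n -> Type} (x0 x1 : forall i, X i) (S J : {set 'I_n})
  (x : forall i, X i) : forall i, X i :=
  fun i => if i \in S then (if i \in J then x1 i else x0 i) else x i.

Section Main.
Variables (d : Order.disp_t) (Y : finTBDistrLatticeType d) (n : nat)
  (X : 'I_n -> Type) (x0 x1 : forall i, X i)
  (f : (forall i, X i) -> Y) (phi : forall k : 'I_n, X k -> Y)
  (hbound : forall (k : 'I_n) (a : X k), phi k (x0 k) <= phi k a <= phi k (x1 k))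
  (hmed : forall (k : 'I_n) (x : forall i, X i),
     f x = med (f (upd x k (x0 k))) (phi k (x k)) (f (upd x k (x1 k)))).
Variable x : forall i, X i.
Let y i := phi i (x i).
Let M (J : {set 'I_n}) := \meet_(i in J) y i.
Let C S I := f (fixv x0 x1 S (I :&: S) x) `&` M (I :&: S).

Lemma base : f x = \join_(I : {set 'I_n}) C set0 I.
Proof.
apply: le_anti; apply/andP; split.
  apply: (joins_min (j := set0)) => //.
  rewrite /C setI0 /M big_set0 meetx1.
  have -> : fixv x0 x1 set0 set0 x = x.
    by apply: functional_extensionality_dep => i; rewrite /fixv inE.
  by [].
apply/joinsP => I _; rewrite /C setI0.
have -> : fixv x0 x1 set0 set0 x = x.
  by apply: functional_extensionality_dep => i; rewrite /fixv inE.
exact: leIl.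
Qed.

Lemma step (S : {set 'I_n}) (k : 'I_n) : k \notin S ->
  \join_(I : {set 'I_n}) C S I = \join_(I : {set 'I_n}) C (k |: S) I.
Proof.
move=> kS.
have eA I : C (k |: S) (I :\ k) =
   f (upd (fixv x0 x1 S (I :&: S) x) k (x0 k)) `&` M (I :&: S).
  rewrite /C; have -> : (I :\ k) :&: (k |: S) = I :&: S.
    apply/setP => i; rewrite !inE; case: (eqVneq i k) => [->|] //=.
    by rewrite (negbTE kS) andbF.
  congr (f _ `&` _); apply: functional_extensionality_dep => i.
  rewrite /fixv /upd; case: (eqVneq k i) => [<-|ki].
    by rewrite dfwith_in !inE eqxx /= (negbTE kS) andbF.
  by rewrite dfwith_out // !inE (eq_sym i) (negbTE ki).
have eB I : C (k |: S) (k |: I) =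
   y k `&` f (upd (fixv x0 x1 S (I :&: S) x) k (x1 k)) `&` M (I :&: S).
  rewrite /C; have -> : (k |: I) :&: (k |: S) = k |: (I :&: S).
    by apply/setP => i; rewrite !inE; case: (eqVneq i k).
  rewrite /M big_setU1 /=; last by rewrite !inE (negbTE kS) andbF.
  rewrite -/(M _) meetCA meetA; congr (_ `&` _ `&` _).
  congr (f _); apply: functional_extensionality_dep => i.
  rewrite /fixv /upd; case: (eqVneq k i) => [<-|ki].
    by rewrite dfwith_in !inE eqxx.
  by rewrite dfwith_out // !inE (eq_sym i) (negbTE ki).
have eS I : C S I = (C (k |: S) (I :\ k)) `|` C (k |: S) (k |: I).
  rewrite eA eB /C.
  have zk : fixv x0 x1 S (I :&: S) x k = x k by rewrite /fixv (negbTE kS).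
  rewrite {1}(@key _ _ _ _ _ _ f phi hbound hmed k (fixv x0 x1 S (I :&: S) x)) zk -/(y k) meetUl; congr (_ `|` _).
apply: le_anti; apply/andP; split.
  apply/joinsP => I _; rewrite eS leUx.
  by rewrite (joins_sup (j := I :\ k)) // (joins_sup (j := k |: I)).
apply/joinsP => I _.
apply: (joins_min (j := I)) => //; rewrite eS.
case: (boolP (k \in I)) => kI.
  have -> : k |: I = I by apply/setP => i; rewrite !inE; case: eqVneq => // ->.
  exact: leUr.
have -> : I :\ k = I.
  by apply/setP => i; rewrite !inE; case: eqVneq => // ->; rewrite (negbTE kI).
exact: leUl.
Qed.
End Main.

Theorem mainTheorem1 (d : Order.disp_t) (Y : finTBDistrLatticeType d) (n : nat)
  (X : 'I_n -> Type) (x0 x1 : forall i, X i) (hx01 : forall i, x0 i <> x1 i)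
  (f : (forall i, X i) -> Y) (phi : forall k : 'I_n, X k -> Y)
  (hbound : forall (k : 'I_n) (a : X k), phi k (x0 k) <= phi k a <= phi k (x1 k))
  (hmed : forall (k : 'I_n) (x : forall i, X i),
     f x = med (f (upd x k (x0 k))) (phi k (x k)) (f (upd x k (x1 k)))) :
  forall x : forall i, X i, f x = p0 x0 x1 f (fun i => phi i (x i)).
Proof.
move=> x.
have H (s : seq 'I_n) : f x = \join_(I : {set 'I_n})
   (f (fixv x0 x1 [set i in s] (I :&: [set i in s]) x) `&`
    \meet_(i in I :&: [set i in s]) phi i (x i)).
  elim: s => [|k s IH].
    have -> : [set i in [::]] = (set0 : {set 'I_n}) by apply/setP => i; rewrite !inE.
    exact: base.
  have -> : [set i in k :: s] = k |: [set i in s].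
    by apply/setP => i; rewrite !inE.
  case: (boolP (k \in [set i in s])) => ks.
    by rewrite (setUidPr _) ?sub1set.
  by rewrite IH; apply: step.
rewrite (H (enum 'I_n)) /p0.
have -> : [set i in enum 'I_n] = setT by apply/setP => i; rewrite !inE mem_enum.
apply: eq_bigr => I _; rewrite setIT; congr (f _ `&` _).
by apply: functional_extensionality_dep => i; rewrite /fixv /hat1 inE.
Qed.
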